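(* For the class $\mathcal P_m$ of envy-free item-pricing auctions with prices in $\{1/m,\dots,m/m\}^k$, the matrix $\Gamma^{\mathrm{IP}}$ is $(2,1)$-admissible and implementable with complexity $m$ (with respect to learner actions $\mathcal P_m$, adversary actions = profiles of combinatorial valuations, and payoff $f(\vec a,\vec v)=\mathrm{Rev}(\vec a,\vec v)$).
   Context: There are $k$ heterogeneous items with supplies $s_\ell\ge1$ (possibly infinite), and $n$ bidders with combinatorial valuations $v_i:\{0,1\}^k\to[0,1]$, $v_i(\vec 0)=0$. An envy-free item-pricing auction with price vector $\vec a$ considers bidders $i=1,\dots,n$ in order and gives bidder $i$ a bundle $\vec q_i\in\{0,1\}^k$ maximizing $v_i(\vec q_i)-\vec a\cdot\vec q_i$ among bundles composable from remaining supplies (ties in utility broken in favor of a bundle with larger total price), charging $\vec a\cdot\vec q_i$; $\mathrm{Rev}(\vec a,\vec v)$ is the total charge. $\mathcal P_m$: such auctions with all $a_\ell\in\{1/m,\dots,m/m\}$. $\Gamma^{\mathrm{IP}}$: the $|\mathcal P_m|\times k\lceil\log_2m\rceil$ binary matrix whose entry in row $\vec a$ and column $(\ell-1)\lceil\log_2 m\rceil+\beta$ is the $\beta$-th bit of the integer $ma_\ell$. A matrix $\Gamma$ (rows indexed by learner actions) is $(\kappa,\delta)$-admissible if its rows are distinct, each column has at most $\kappa$ distinct values and distinct values in a column differ by at least $\delta$; it is implementable with complexity $M$ if for each column $j$ there is a finite set $S_j$ of pairs $(w,y)$ ($w\ge0$, $y$ an adversary action), $|S_j|\le M$, with $\Gamma_{xj}-\Gamma_{x'j}=\sum_{(w,y)\in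 S_j}w(f(x,y)-f(x',y))$ for all learner actions $x,x'$. *)

(* Defs.v *)
From HB Require Import structures.
From mathcomp Require Import all_boot all_order all_algebra.
Set Implicit Arguments. Unset Strict Implicit. Unset Printing Implicit Defensive.
Import Order.TTheory GRing.Theory Num.Theory.
Local Open Scope ring_scope.

Definition admissible (R : realFieldType) (X J : finType) (G : X -> J -> R)
    (kappa : nat) (delta : R) : Prop :=
  (forall x x' : X, (forall j, G x j = G x' j) -> x = x') /\
  (forall j, (size (undup [seq G x j | x <- enum X]) <= kappa)%N) /\
  (forall j x x', G x j != G x' j -> delta <= `|G x j - G x' j|).

(* Implementable with complexity M w.r.t. payoff f : X -> Y -> R, where the
   adversary actions are the y : Y satisfying Yok. S_j is a finite set of
   pairs (w, y), represented as a duplicate-free sequence. *)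
Definition implementable (R : realFieldType) (X : finType) (Y : eqType)
    (Yok : Y -> Prop) (f : X -> Y -> R) (J : finType) (G : X -> J -> R)
    (M : nat) : Prop :=
  forall j : J, exists S : seq (R * Y),
    [/\ uniq S, (size S <= M)%N,
        (forall p, p \in S -> 0 <= p.1 /\ Yok p.2) &
        (forall x x' : X,
           G x j - G x' j = \sum_(p <- S) p.1 * (f x p.2 - f x' p.2))].

Definition bundle (k : nat) := {ffun 'I_k -> bool}.

Definition bundle0 (k : nat) : bundle k := [ffun _ => false].

Section Auction.
Variables (R : realFieldType) (k : nat).

Definition bprice (a : 'I_k -> R) (q : bundle k) : R :=
  \sum_(l < k) a l * (q l)%:R.

(* supplies: None = infinite supply, Some c = supply c;
   used l = number of copies of item l already sold *)
Definition feasible (s : 'I_k -> option nat) (used : {ffun 'I_k -> nat})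
    (q : bundle k) : bool :=
  [forall l, q l ==> (if s l is Some c then (used l < c)%N else true)].

Definition best_bundles (s : 'I_k -> option nat) (used : {ffun 'I_k -> nat})
    (a : 'I_k -> R) (v : {ffun bundle k -> R}) : {set bundle k} :=
  let F := [set q | feasible s used q] in
  let u q := v q - bprice a q in
  let B := [set q in F | [forall q', (q' \in F) ==> (u q' <= u q)]] in
  [set q in B | [forall q', (q' \in B) ==> (bprice a q' <= bprice a q)]].

(* tie : any rule selecting an element of a nonempty set of bundles
   (resolves ties remaining after the price tie-break). *)
Fixpoint run (s : 'I_k -> option nat) (tie : {set bundle k} -> bundle k)
    (a : 'I_k -> R) (vs : seq {ffun bundle k -> R})
    (used : {ffun 'I_k -> nat}) : R :=
  match vs with
  | [::] => 0
  | v :: vs' =>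
      let q := tie (best_bundles s used a v) in
      bprice a q + run s tie a vs' [ffun l => (used l + q l)%N]
  end.

Definition Rev (n : nat) (s : 'I_k -> option nat)
    (tie : {set bundle k} -> bundle k) (a : 'I_k -> R)
    (v : {ffun 'I_n -> {ffun bundle k -> R}}) : R :=
  run s tie a [seq v i | i <- enum 'I_n] [ffun _ => 0%N].

Definition valid_profile (n : nat) (v : {ffun 'I_n -> {ffun bundle k -> R}})
    : Prop :=
  forall i, v i (bundle0 k) = 0 /\ (forall q, 0 <= v i q <= 1).

End Auction.

(* Learner actions P_m: a price vector with a_l = (x l).+1 / m, x l : 'I_m *)
Definition priceVec (R : realFieldType) (k m : nat) (x : {ffun 'I_k -> 'I_m})
    : 'I_k -> R :=
  fun l => ((x l).+1)%:R / m%:R.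

Definition nbits (m : nat) : nat := up_log 2 m.

(* Gamma^IP: entry in row x and (0-based) column j = l0 * nbits m + b0 is the
   (b0+1)-th least significant bit of the integer m * a_l = (x l).+1. *)
Definition GammaIP (R : realFieldType) (k m : nat)
    (x : {ffun 'I_k -> 'I_m}) (j : 'I_(k * nbits m)) : R :=
  match (insub (j %/ nbits m)%N : option 'I_k) with
  | Some l => (odd (((x l).+1) %/ 2 ^ (j %% nbits m)))%:R
  | None => 0
  end.

(* Main.v *)
Require Import Defs.
From HB Require Import structures.
From mathcomp Require Import all_boot all_order all_algebra.
From mathcomp Require Import ring lra zify.
Import Order.TTheory GRing.Theory Num.Theory.
Set Implicit Arguments. Unset Strict Implicit. Unset Printing Implicit Defensive.

Module H.
Local Open Scope ring_scope.
Section Auc.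
Variables (R : realFieldType) (k : nat).

Definition uv (l : 'I_k) (c : R) : {ffun bundle k -> R} :=
  [ffun q => c * ((q : bundle k) l)%:R].
Definition el (l : 'I_k) : bundle k := [ffun i => i == l].

Lemma bprice_ge (a : 'I_k -> R) l (q : bundle k) :
  (forall i, 0 <= a i) -> a l * (q l)%:R <= bprice a q.
Proof.
move=> ha; rewrite /bprice (bigD1 l) //= lerDl.
apply: sumr_ge0 => i _; apply: mulr_ge0 => //; exact: ler0n.
Qed.

Lemma bprice_ge0 (a : 'I_k -> R) (q : bundle k) :
  (forall i, 0 <= a i) -> 0 <= bprice a q.
Proof.
move=> ha; apply: sumr_ge0 => i _; apply: mulr_ge0 => //; exact: ler0n.
Qed.

Lemma bprice0 (a : 'I_k -> R) : bprice a (bundle0 k) = 0.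
Proof. by apply: big1 => i _; rewrite ffunE mulr0. Qed.

Lemma bprice_el (a : 'I_k -> R) l : bprice a (el l) = a l.
Proof.
rewrite /bprice (bigD1 l) //= big1 ?ffunE ?eqxx ?mulr1 ?addr0 //.
by move=> i /negbTE hi; rewrite ffunE hi mulr0.
Qed.

Lemma feas0 s used : feasible (k:=k) s used (bundle0 k).
Proof. by apply/forallP => i; rewrite ffunE. Qed.

Variables (s : 'I_k -> option nat) (tie : {set bundle k} -> bundle k).
Hypothesis tie_ok : forall A : {set bundle k}, A != set0 -> tie A \in A.

Lemma best_rev (a : 'I_k -> R) l c used :
  (forall i, 0 <= a i) -> 0 <= c ->
  (a l <= c -> feasible s used (el l)) ->
  bprice a (tie (best_bundles s used a (uv l c))) = if a l <= c then a l else 0.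
Proof.
move=> ha hc hf.
set Bb := best_bundles _ _ _ _.
pose q0 := if a l <= c then el l else bundle0 k.
have uE q : uv l c q - bprice a q = c * (q l)%:R - bprice a q by rewrite ffunE.
have fq0 : feasible s used q0 by rewrite /q0; case: ifP => [/hf|] //; rewrite feas0.
have hge (q : bundle k) : a l * (q l)%:R <= bprice a q by apply: bprice_ge.
have hge0 (q : bundle k) : 0 <= bprice a q by apply: bprice_ge0.
have bq0 : bprice a q0 = if a l <= c then a l else 0.
  by rewrite /q0; case: ifP; rewrite ?bprice_el ?bprice0.
have uq0 : uv l c q0 - bprice a q0 = if a l <= c then c - a l else 0.
  rewrite uE bq0 /q0; case: ifP => _; rewrite ?ffunE ?eqxx ?mulr1 //.
  by rewrite mulr0 subrr.
have F1 q : uv l c q - bprice a q <= uv l c q0 - bprice a q0.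
  rewrite uq0 uE; have := hge q; have := hge0 q.
  case: (q l); rewrite ?mulr1 ?mulr0; case: ifP => h; lra.
have F3 q : uv l c q0 - bprice a q0 <= uv l c q - bprice a q ->
    bprice a q <= bprice a q0.
  rewrite uq0 uE bq0; have := hge q; have := hge0 q.
  case: (q l); rewrite ?mulr1 ?mulr0; case: ifP => h; lra.
have inB q : q \in [set q1 | feasible s used q1] -> 
   q \in [set q1 in [set q1 | feasible s used q1] | [forall q', (q' \in [set q1 | feasible s used q1]) ==>
        (uv l c q' - bprice a q' <= uv l c q1 - bprice a q1)]] ->
   uv l c q0 - bprice a q0 <= uv l c q - bprice a q.
  move=> _; rewrite inE => /andP [_ /forallP /(_ q0)].
  by rewrite inE => /implyP; apply.
have hq0 : q0 \in Bb.
  rewrite /Bb /best_bundles /= !inE; apply/andP; split; first (apply/andP; split).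
  - exact: fq0.
  - by apply/forallP => q'; apply/implyP => _.
  apply/forallP => q'; apply/implyP => hB; apply: F3.
  have hB' := hB; move: hB'; rewrite inE => /andP [f _].
  exact: (inB q' f).
have hB0 : Bb != set0 by apply/set0Pn; exists q0.
have := tie_ok hB0; set q := tie Bb.
rewrite /Bb /best_bundles /= !inE => /andP [/andP [fq /forallP Hu] /forallP Hp].
have h1 : uv l c q0 - bprice a q0 <= uv l c q - bprice a q.
  by have := Hu q0; rewrite inE => /implyP; apply.
have h2 : bprice a q0 <= bprice a q.
  apply: (implyP (Hp q0)); rewrite inE; apply/andP; split; first by rewrite inE.
  by apply/forallP => q'; apply/implyP => _.
move: h1 h2; rewrite uq0 uE bq0; have := hge q; have := hge0 q.
case: (q l); rewrite ?mulr1 ?mulr0; case: ifP => h; lra.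
Qed.

Lemma run_zero (a : 'I_k -> R) l :
  (forall i, 0 <= a i) -> 0 < a l ->
  forall vs used, all (fun v => v == uv l 0) vs -> run s tie a vs used = 0.
Proof.
move=> ha hal; elim=> [|v vs IH] used //= /andP [/eqP -> H].
rewrite IH // best_rev //.
- by case: ifP => // h; lra.
- move=> h; lra.
Qed.

Definition prof n l (c : R) : {ffun 'I_n.+1 -> {ffun bundle k -> R}} :=
  [ffun i => if i == ord0 then uv l c else uv l 0].

Hypothesis hs : forall l c, s l = Some c -> (0 < c)%N.

Lemma Rev_prof n (a : 'I_k -> R) l c :
  (forall i, 0 <= a i) -> 0 < a l -> 0 <= c ->
  Rev s tie a (prof n l c) = if a l <= c then a l else 0.
Proof.
move=> ha hal hc; rewrite /Rev enum_ordSl /= ffunE eqxx.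
rewrite (run_zero (l:=l)) // ?addr0.
  rewrite best_rev // => _; apply/forallP => i; rewrite ffunE.
  apply/implyP => /eqP ->; case E: (s l) => [c'|] //; rewrite ffunE.
  exact: hs E.
rewrite all_map; apply/allP => i /mapP [j _ ->] /=; rewrite ffunE.
by case: eqP => // /(congr1 val); rewrite /= /bump.

Qed.

Lemma prof_at n l (c : R) : prof n l c ord0 (el l) = c.
Proof. by rewrite /prof ffunE eqxx /uv ffunE /el ffunE eqxx mulr1. Qed.

Lemma prof_valid n l (c : R) : 0 <= c <= 1 -> valid_profile (prof n l c).
Proof.
move=> /andP [h0 h1] i; rewrite ffunE; split.
  by case: ifP => _; rewrite ffunE ffunE mulr0.
by move=> q; case: ifP => _; rewrite ffunE; case: (q l); rewrite ?mulr1 ?mulr0 ?h0 ?h1 ?lexx ?ler01.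
Qed.
End Auc.
Local Close Scope ring_scope.
Lemma mod_split p e : p %% 2^e.+1 = odd p + 2 * ((p %/ 2) %% 2^e).
Proof.
have hr : (p %/ 2) %% 2^e < 2^e by rewrite ltn_pmod // expn_gt0.
have E : p = ((p%/2)%/2^e) * 2^e.+1 + (odd p + 2*((p %/ 2) %% 2^e)).
  have := divn_eq p 2; have := divn_eq (p%/2) (2^e); rewrite modn2 expnS.
  move: (p %/ 2) ((p %/ 2) %/ 2 ^ e) ((p %/ 2) %% 2 ^ e) (2^e) => a b c d.
  nia.
rewrite {1}E modnMDl modn_small //; rewrite expnS; case: (odd p) => /=; lia.
Qed.

Lemma bits_mod e p p' :
  (forall b, b < e -> odd (p %/ 2^b) = odd (p' %/ 2^b)) -> p %% 2^e = p' %% 2^e.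
Proof.
elim: e p p' => [|e IH] p p' H; first by rewrite !modn1.
rewrite !mod_split (IH (p %/ 2) (p' %/ 2)).
  by have := H 0 isT; rewrite !expn0 !divn1 => ->.
by move=> b hb; rewrite -!divnMA -expnS; apply: H.
Qed.

Lemma mod_eq_small e p p' : 0 < p <= 2^e -> 0 < p' <= 2^e ->
  p %% 2^e = p' %% 2^e -> p = p'.
Proof.
move=> /andP [h0 h1] /andP [h0' h1'].
case: (ltngtP p (2^e)) h1 => // hp _; case: (ltngtP p' (2^e)) h1' => // hp' _.
- by rewrite !modn_small.
- by rewrite hp' modnn (modn_small hp) => E; move: h0; rewrite E.
- by rewrite hp modnn (modn_small hp') => E; move: h0'; rewrite -E.
- by rewrite hp hp'.
Qed.

Local Open Scope ring_scope.
Section W.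
Variables (R : realFieldType) (m b : nat).
Hypothesis m0 : (0 < m)%N.
Let M : R := m%:R.
Definition Bf (t : nat) : R := (odd (t %/ 2^b))%:R.
Definition Wf (t : nat) : R := if (t <= m)%N then M * (Bf t + M) / t%:R else 0.
Definition wt (t : nat) : R := Wf t - Wf t.+1.

Lemma Bf01 t : 0 <= Bf t <= 1.
Proof. by rewrite /Bf; case: odd; rewrite ?lexx ?ler01. Qed.

Lemma wt_ge0 t : (0 < t <= m)%N -> 0 <= wt t.
Proof.
move=> /andP [t0 tm]; rewrite /wt /Wf tm.
have M0 : 0 < M by rewrite ltr0n.
have T0 : 0 < t%:R :> R by rewrite ltr0n.
case: (ltnP t m) => h.
  have hM : t%:R + 1 <= M :> R by rewrite /M natr1 ler_nat.
  have := Bf01 t; have := Bf01 t.+1.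
  move: (Bf t) (Bf t.+1) => x y /andP [y0 y1] /andP [x0 x1].
  have -> : M * (x + M) / t%:R - M * (y + M) / t.+1%:R =
      M * ((x + M) * (t%:R + 1) - (y + M) * t%:R) / (t%:R * (t%:R + 1)).
    rewrite -natr1; field; apply/andP; split; lra.
  apply: divr_ge0; last by apply: mulr_ge0; lra.
  apply: mulr_ge0; first lra.
  nra.
rewrite subr0.
apply: divr_ge0; last lra.
have := Bf01 t; move=> /andP [? ?]; apply: mulr_ge0; lra.
Qed.

Lemma sumW p : (0 < p <= m)%N ->
  \sum_(t <- iota 1 m) wt t * (if p%:R / M <= t%:R / M then p%:R / M else 0)
  = Bf p + M.
Proof.
move=> /andP [p0 pm].
have M0 : 0 < M by rewrite ltr0n.
under eq_bigr => t _ do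
  rewrite ler_pM2r ?invr_gt0 // ler_nat.
have -> : m = (p.-1 + (m - p.-1))%N by lia.
rewrite iotaD big_cat /= big1_seq ?add0r; last first.
  by move=> t; rewrite mem_iota => /andP [_ h]; case: ifP => [h'|]; [lia | rewrite mulr0].
have -> : (1 + p.-1 = p)%N by lia.
rewrite (eq_big_seq (fun t => wt t * (p%:R / M))); last first.
  by move=> t; rewrite mem_iota => /andP [h _]; rewrite h.
rewrite -big_distrl /=.
have -> : iota p (m - p.-1) = index_iota p m.+1.
  by rewrite /index_iota; congr iota; lia.
rewrite (telescope_sumr_eq (fun t => - Wf t)); last first.
  by move=> t _; rewrite /wt opprK addrC.
  by lia.
rewrite /Wf ltnn pm oppr0 add0r opprK.
have P0 : p%:R != 0 :> R by rewrite pnatr_eq0 -lt0n.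
field; apply/andP; split => //; lra.
Qed.
End W.
End H.
Import H.
Unset Implicit Arguments.
Local Open Scope ring_scope.

Theorem lemma3p4 (R : realFieldType) (k n m : nat)
    (s : 'I_k -> option nat) (tie : {set bundle k} -> bundle k) :
  (0 < m)%N -> (0 < n)%N ->
  (forall l c, s l = Some c -> (0 < c)%N) ->
  (forall A : {set bundle k}, A != set0 -> tie A \in A) ->
  admissible (@GammaIP R k m) 2 1 /\
  implementable (@valid_profile R k n)
    (fun (x : {ffun 'I_k -> 'I_m}) (v : {ffun 'I_n -> {ffun bundle k -> R}}) =>
       @Rev R k n s tie (@priceVec R k m x) v)
    (@GammaIP R k m) m.
Proof.
move=> m0 n0 hs tie_ok.
have G01 (x : {ffun 'I_k -> 'I_m}) j : @GammaIP R k m x j \in [:: 0; 1].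
  rewrite /GammaIP; case: insub => [l|]; last by rewrite inE eqxx.
  by case: odd; rewrite !inE eqxx ?orbT.
split; [split; [|split] |].
- move=> x x' H; apply/ffunP => l; apply: val_inj; apply: succn_inj.
  have hm : (m <= 2 ^ nbits m)%N by apply: up_logP.
  apply: (@mod_eq_small (nbits m)).
  + by rewrite /= (leq_trans (ltn_ord _) hm).
  + by rewrite /= (leq_trans (ltn_ord _) hm).
  apply: bits_mod => b hb.
  have hj : (l * nbits m + b < k * nbits m)%N.
    have := ltn_ord l; move: (nat_of_ord l) => L hL.
    have : (L.+1 * nbits m <= k * nbits m)%N by rewrite leq_mul2r hL orbT.
    rewrite mulSn; lia.
  have := H (Ordinal hj); rewrite /GammaIP /=.
  have nb0 : (0 < nbits m)%N by lia.
  rewrite divnMDl // divn_small // addn0 modnMDl modn_small // valK.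
  by move/eqP; rewrite eqr_nat; do 2 case: odd.
- move=> j; apply: (@leq_trans (size [:: (0:R); 1])) => //.
  apply: uniq_leq_size; first exact: undup_uniq.
  by move=> y; rewrite mem_undup => /mapP [x _ ->].
- move=> j x x'; have := G01 x j; have := G01 x' j.
  rewrite !inE => /orP [/eqP -> | /eqP ->] /orP [/eqP -> | /eqP ->];
    rewrite ?eqxx // => _.
  + by rewrite subr0 normr1.
  + by rewrite sub0r normrN normr1.
move=> j.
case E: (insub (j %/ nbits m)%N : option 'I_k) => [l|]; last first.
  exists [::]; split => // x x'; rewrite /GammaIP E subrr big_nil //.
case: n n0 => [//|n'] _.
pose M : R := m%:R.
have M0 : 0 < M by rewrite ltr0n.
pose b := (j %% nbits m)%N.
exists [seq (@wt R m b t, prof n' l (t%:R / M)) | t <- iota 1 m]; split.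
- apply: (@map_uniq _ _ snd); rewrite -map_comp.
  rewrite map_inj_uniq ?iota_uniq // => t1 t2 /= h.
  have := congr1 (fun v : {ffun 'I_n'.+1 -> {ffun bundle k -> R}} => v ord0 (el l)) h.
  rewrite /= !prof_at => /(congr1 (fun z => z * M)).
  by rewrite !divfK ?gt_eqF // => /eqP; rewrite eqr_nat => /eqP.
- by rewrite size_map size_iota.
- move=> q /mapP [t ht ->] /=; move: ht; rewrite mem_iota => ht; split.
    by apply: wt_ge0; lia.
  apply: prof_valid; rewrite divr_ge0 ?ler0n ?(ltW M0) //=.
  by rewrite ler_pdivrMr // mul1r ler_nat; lia.
move=> x x'; rewrite big_map.
have pos (y : {ffun 'I_k -> 'I_m}) i : 0 < @priceVec R k m y i.
  by rewrite /priceVec divr_gt0 // ltr0n.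
have hR (y : {ffun 'I_k -> 'I_m}) t :
    Rev s tie (@priceVec R k m y) (prof n' l (t%:R / M)) =
    if @priceVec R k m y l <= t%:R / M then @priceVec R k m y l else 0.
  apply: Rev_prof => //; first by move=> i; apply: ltW.
  by rewrite divr_ge0 ?ler0n ?ltW.
under eq_bigr => t _ do rewrite /= !hR mulrBr.
rewrite sumrB /priceVec !sumW //; try (apply/andP; split => //; exact: ltn_ord).
by rewrite /GammaIP E -/b /Bf; ring.
Qed.
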